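(* Let $k\ge2$ and consider the edge reinforced random walk on the even cycle $\mathcal G_{2k}$ with weight function $W:\mathbb N\to(0,\infty)$ satisfying $\sum_{m\in\mathbb N}\frac1{W(m)}<\infty$, arbitrary initial edge weights $X_0^e\in\mathbb N$ and arbitrary starting vertex. Then almost surely at least one edge of $\mathcal G_{2k}$ is traversed only finitely often, i.e. $\mathbb P(\text{all edges of }\mathcal G_{2k}\text{ are traversed infinitely often})=0$.
   Context: $\mathbb N=\{0,1,2,\ldots\}$. For $l\ge 3$, the cycle $\mathcal G_l$ has vertices $\{0,1,\ldots,l-1\}$ and edges $e_i=\{i,i+1\}$, $i=0,\ldots,l-1$, with addition modulo $l$. Edge reinforced random walk (ERRW) on a connected graph $\mathcal G$ of bounded degree: given a weight function $W:\mathbb N\to(0,\infty)$, initial edge weights $X_0^e\in\mathbb N$, and a starting vertex $I_0=v_0$, the process $(I_n)_{n\ge0}$ with natural filtration $(\mathcal F_n)$ jumps at each step to a neighbour of its current vertex with $\mathbb P(I_{n+1}=v'\mid\mathcal F_n)1_{\{I_n=v\}}=\frac{W(X_n^{\{v,v'\}})}{\sum_{w\sim v}W(X_n^{\{v,w\}})}1_{\{I_n=v\sim v'\}}$, where $X_n^e=X_0^e+\sum_{j=0}^{n-1}1_{\{\{I_j,I_{j+1}\}=e\}}$. *)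

(* Defs.v *)
From Stdlib Require Import Reals List Arith.
Open Scope R_scope.

(* ERRW on the cycle G_l, vertices 0..l-1, edge e_i = {i, i+1 mod l}.
   From vertex v the two incident edges are e_v (leading to v+1) and
   e_{v-1} (leading to v-1), all mod l.  Since l >= 3 these are distinct
   and lead to distinct neighbours, so a trajectory of length M is encoded
   by its M directions. *)

Definition vnext (l v : nat) : nat := (v + 1) mod l.
Definition vprev (l v : nat) : nat := (v + l - 1) mod l.

Definition incr (X : nat -> nat) (e : nat) : nat -> nat :=
  fun i => if Nat.eqb i e then S (X i) else X i.

(* Expectation, under the ERRW law started at vertex v with edge-weight
   state X, of f(X_M), where X_M is the edge-weight function after M steps.
   This is the finite-dimensional law of (I_0,...,I_M) given by the
   transition probabilities W(X^{v,v'}) / sum_{w ~ v} W(X^{v,w}). *)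
Fixpoint errw_expect (W : nat -> R) (l : nat) (M : nat) (X : nat -> nat)
  (v : nat) (f : (nat -> nat) -> R) : R :=
  match M with
  | O => f X
  | S M' =>
      let ep := v in
      let em := vprev l v in
      let tot := W (X ep) + W (X em) in
      (W (X ep) / tot) * errw_expect W l M' (incr X ep) (vnext l v) f
      + (W (X em) / tot) * errw_expect W l M' (incr X em) (vprev l v) f
  end.

Definition all_edges_at_least (l N : nat) (X0 : nat -> nat)
  (X : nat -> nat) : R :=
  if forallb (fun i => Nat.leb N (X i - X0 i)) (seq 0 l) then 1 else 0.

Definition prob_all_edges_N_by_M (W : nat -> R) (l : nat) (X0 : nat -> nat)
  (v0 N M : nat) : R :=
  errw_expect W l M X0 v0 (all_edges_at_least l N X0).

(* Main.v *)
Require Import Defs.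
From Stdlib Require Import Reals Lra Lia List Arith Classical.
From Coquelicot Require Import Coquelicot.
Open Scope R_scope.

Definition phi (y : R) : C := (/(1 + y*y), - y / (1 + y*y)).
Definition psi (y : R) : C := (1, y).

Lemma cmod_le (z : C) r : 0 <= r -> fst z ^ 2 + snd z ^ 2 <= r ^ 2 -> Cmod z <= r.
Proof. intros H H'. unfold Cmod. rewrite <- (sqrt_pow2 r H). apply sqrt_le_1_alt. auto. Qed.

Lemma psi_phi y : Cmult (psi y) (phi y) = RtoC 1.
Proof.
  assert (0 < 1 + y*y) by nra.
  unfold Cmult, psi, phi, RtoC; simpl. f_equal; field; lra.
Qed.

Lemma inv_le_a d a : 0 < a -> a <= d -> / d <= / a.
Proof. intros. apply Rinv_le_contravar; lra. Qed.

Lemma phi_le1 y : Cmod (phi y) <= 1.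
Proof.
  assert (0 < 1 + y*y) by nra.
  apply cmod_le; [lra|]. unfold phi; cbn [fst snd].
  replace ((/ (1 + y * y)) ^ 2 + (- y / (1 + y * y)) ^ 2) with (/ (1 + y*y)) by (field; lra).
  replace (1^2) with (/1) by field.
  apply inv_le_a; nra.
Qed.

Lemma phi_sub1 y : Cmod (Cminus (phi y) (RtoC 1)) <= Rabs y.
Proof.
  assert (0 < 1 + y*y) by nra.
  apply cmod_le; [apply Rabs_pos|]. unfold phi, Cminus, Cplus, Copp, RtoC; cbn [fst snd].
  rewrite pow2_abs.
  replace ((/ (1 + y * y) + - (1)) ^ 2 + (- y / (1 + y * y) + - 0) ^ 2) with (y * y / (1 + y*y)) by (field; lra).
  apply Rmult_le_reg_r with (1 + y*y); [lra|].
  unfold Rdiv. rewrite Rmult_assoc, Rinv_l by lra. nra.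
Qed.

Lemma phi_small y : 4 <= Rabs y -> Cmod (phi y) <= / 4.
Proof.
  intros Hy. assert (0 < 1 + y*y) by nra.
  assert (16 <= y*y). { assert (y*y = Rabs y * Rabs y) by (rewrite <- Rabs_mult; rewrite Rabs_pos_eq; nra). nra. }
  apply cmod_le; [lra|]. unfold phi; cbn [fst snd].
  replace ((/ (1 + y * y)) ^ 2 + (- y / (1 + y * y)) ^ 2) with (/ (1 + y*y)) by (field; lra).
  replace ((/4)^2) with (/16) by field.
  apply inv_le_a; nra.
Qed.

Lemma Re_le_Cmod z : Re z <= Cmod z.
Proof. pose proof (re_le_Cmod z). pose proof (Rle_abs (Re z)). lra. Qed.

Lemma Re_ge z : 1 - Cmod (Cminus z (RtoC 1)) <= Re z.
Proof.
  pose proof (re_le_Cmod (Cminus z (RtoC 1))).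
  assert (Re (Cminus z (RtoC 1)) = Re z - 1) by (destruct z; unfold Cminus, Cplus, Copp, RtoC, Re; simpl; ring).
  rewrite H0 in H. pose proof (Rle_abs (- (Re z - 1))). rewrite Rabs_Ropp in H1. lra.
Qed.

Lemma Cmod_mul_sub1 z w : Cmod w <= 1 ->
  Cmod (Cminus (Cmult z w) (RtoC 1)) <= Cmod (Cminus z (RtoC 1)) + Cmod (Cminus w (RtoC 1)).
Proof.
  intros Hw.
  replace (Cminus (Cmult z w) (RtoC 1)) with (Cplus (Cmult (Cminus z (RtoC 1)) w) (Cminus w (RtoC 1))) by ring.
  eapply Rle_trans; [apply Cmod_triangle|]. rewrite Cmod_mult.
  pose proof (Cmod_ge_0 (Cminus z (RtoC 1))). nra.
Qed.

Section Main.
Variable W : nat -> R.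
Hypothesis hWpos : forall m, 0 < W m.
Variable k : nat.
Hypothesis hk : (1 <= k)%nat.
Variable X0 : nat -> nat.
Variable Sl : R.
Hypothesis hSl : Un_cv (fun n => sum_f_R0 (fun m => / W m) n) Sl.

Definition sg (e : nat) : R := if Nat.even e then 1 else -1.

Lemma sg_abs e : Rabs (sg e) = 1.
Proof. unfold sg; destruct (Nat.even e); [apply Rabs_R1| rewrite Rabs_left; lra]. Qed.

Fixpoint blk (t s : R) (x n : nat) : C :=
  match n with O => RtoC 1 | S n' => Cmult (phi (- (t * s) / W x)) (blk t s (S x) n') end.

Fixpoint outer (t : R) (K : nat) (X : nat -> nat) (n : nat) : C :=
  match n with O => RtoC 1 | S n' => Cmult (outer t K X n') (blk t (sg n') (X n') (K - X n')) end.

Definition G t K X := outer t K X (2*k).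

Fixpoint ps (n : nat) : R := match n with O => 0 | S n' => ps n' + / W n' end.

Lemma ps_sum n : ps (S n) = sum_f_R0 (fun m => / W m) n.
Proof. induction n; simpl in *. ring. rewrite <- IHn. simpl. ring. Qed.

Lemma ps_incr a b : (a <= b)%nat -> ps a <= ps b.
Proof.
  intros H; induction H; [lra|]. simpl. pose proof (hWpos m). pose proof (Rinv_0_lt_compat _ H0). lra.
Qed.

Lemma ps_le n : ps n <= Sl.
Proof.
  destruct (Rle_lt_dec (ps n) Sl) as [h|h]; auto. exfalso.
  destruct (hSl (ps n - Sl)) as [N HN]; [lra|].
  specialize (HN (max N n) (Nat.le_max_l _ _)). unfold R_dist in HN.
  rewrite <- ps_sum in HN. pose proof (ps_incr n (S (max N n))). 
  assert (n <= S (max N n))%nat by lia. specialize (H H0).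
  rewrite Rabs_pos_eq in HN; lra.
Qed.

Lemma ps_tail eps : 0 < eps -> exists N, forall n, (N <= n)%nat -> Sl - ps n < eps.
Proof.
  intros He. destruct (hSl eps He) as [N HN]. exists (S N). intros n Hn.
  destruct n; [lia|]. specialize (HN n ltac:(lia)). unfold R_dist in HN. rewrite ps_sum.
  pose proof (Rle_abs (- (sum_f_R0 (fun m : nat => / W m) n - Sl))). rewrite Rabs_Ropp in H. lra.
Qed.

Lemma blk_le1 t s x n : Cmod (blk t s x n) <= 1.
Proof.
  revert x; induction n; intro x; simpl. rewrite Cmod_1; lra.
  rewrite Cmod_mult. pose proof (phi_le1 (- (t * s) / W x)). pose proof (IHn (S x)).
  pose proof (Cmod_ge_0 (phi (- (t * s) / W x))). pose proof (Cmod_ge_0 (blk t s (S x) n)). nra.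
Qed.

Lemma blk_sub1 t s x n : Rabs s = 1 -> Cmod (Cminus (blk t s x n) (RtoC 1)) <= Rabs t * (ps (x + n) - ps x).
Proof.
  intro Hs. revert x; induction n; intro x; simpl.
  - replace (Cminus (RtoC 1) (RtoC 1)) with (RtoC 0) by ring. rewrite Cmod_0. rewrite Nat.add_0_r. lra.
  - eapply Rle_trans; [apply Cmod_mul_sub1; apply blk_le1|].
    pose proof (phi_sub1 (- (t * s) / W x)).
    assert (Rabs (- (t * s) / W x) = Rabs t * / W x).
    { unfold Rdiv. rewrite Rabs_mult, Rabs_Ropp, Rabs_mult, Hs, Rabs_inv, (Rabs_pos_eq (W x)). ring.
      pose proof (hWpos x); lra. }
    specialize (IHn (S x)). replace (x + S n)%nat with (S x + n)%nat by lia. change (ps (S x)) with (ps x + / W x) in IHn. rewrite H0 in H. lra.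
Qed.

Lemma outer_le1 t K X n : Cmod (outer t K X n) <= 1.
Proof.
  induction n; simpl. rewrite Cmod_1; lra.
  rewrite Cmod_mult. pose proof (blk_le1 t (sg n) (X n) (K - X n)).
  pose proof (Cmod_ge_0 (outer t K X n)). pose proof (Cmod_ge_0 (blk t (sg n) (X n) (K - X n))). nra.
Qed.

Lemma outer_sub1 t K X n b : (forall e, (e < n)%nat -> Cmod (Cminus (blk t (sg e) (X e) (K - X e)) (RtoC 1)) <= b) ->
  Cmod (Cminus (outer t K X n) (RtoC 1)) <= INR n * b.
Proof.
  induction n; intros H; cbn [outer].
  - replace (Cminus (RtoC 1) (RtoC 1)) with (RtoC 0) by ring. rewrite Cmod_0. simpl. lra.
  - eapply Rle_trans; [apply Cmod_mul_sub1; apply blk_le1|].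
    rewrite S_INR. specialize (IHn (fun e he => H e ltac:(lia))). specialize (H n ltac:(lia)). lra.
Qed.

Lemma outer_le_blk t K X n a : (a < n)%nat -> Cmod (outer t K X n) <= Cmod (blk t (sg a) (X a) (K - X a)).
Proof.
  induction n; intros Ha; [lia|]. simpl. rewrite Cmod_mult.
  pose proof (Cmod_ge_0 (outer t K X n)). pose proof (Cmod_ge_0 (blk t (sg n) (X n) (K - X n))).
  destruct (Nat.eq_dec a n).
  - subst. pose proof (outer_le1 t K X n). nra.
  - specialize (IHn ltac:(lia)). pose proof (blk_le1 t (sg n) (X n) (K - X n)). nra.
Qed.

Lemma outer_eq t K X Y n : (forall e, (e < n)%nat -> X e = Y e) -> outer t K X n = outer t K Y n.
Proof. induction n; intros H; simpl; auto. rewrite IHn by (intros; apply H; lia). rewrite H by lia. auto. Qed.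

Lemma outer_change t K X Y a c n : (a < n)%nat -> (forall e, e <> a -> X e = Y e) ->
  blk t (sg a) (X a) (K - X a) = Cmult c (blk t (sg a) (Y a) (K - Y a)) ->
  outer t K X n = Cmult c (outer t K Y n).
Proof.
  induction n; intros Ha HXY Hb; [lia|]. simpl.
  destruct (Nat.eq_dec a n).
  - subst. rewrite (outer_eq t K X Y n) by (intros; apply HXY; lia). rewrite Hb. ring.
  - rewrite IHn by (auto; lia). rewrite HXY by auto. ring.
Qed.


Lemma vprev_prop v : (v < 2*k)%nat ->
  (vprev (2*k) v < 2*k)%nat /\ vprev (2*k) v <> v /\ sg (vprev (2*k) v) = - sg v.
Proof.
  intros Hv. unfold vprev, sg.
  destruct v as [|v].
  - rewrite Nat.mod_small by lia.
    replace (0 + 2 * k - 1)%nat with (1 + 2 * (k-1))%nat by lia.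
    rewrite Nat.even_add_mul_2. simpl. split; [lia|split;[lia|ring]].
  - replace (S v + 2 * k - 1)%nat with (v + 1 * (2*k))%nat by lia.
    rewrite Nat.Div0.mod_add, Nat.mod_small by lia.
    rewrite Nat.even_succ, <- Nat.negb_even. split; [lia|split;[lia|]].
    destruct (Nat.even v); simpl; ring.
Qed.

Lemma vnext_lt v : (vnext (2*k) v < 2*k)%nat.
Proof. unfold vnext. apply Nat.mod_upper_bound. lia. Qed.

Definition pa X v := W (X v) / (W (X v) + W (X (vprev (2*k) v))).
Definition pb X v := W (X (vprev (2*k) v)) / (W (X v) + W (X (vprev (2*k) v))).

Lemma pab X v : 0 <= pa X v /\ 0 <= pb X v /\ pa X v + pb X v = 1.
Proof.
  unfold pa, pb. pose proof (hWpos (X v)). pose proof (hWpos (X (vprev (2*k) v))).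
  repeat split.
  - apply Rmult_le_pos; [lra| left; apply Rinv_0_lt_compat; lra].
  - apply Rmult_le_pos; [lra| left; apply Rinv_0_lt_compat; lra].
  - field. lra.
Qed.

Lemma incr_same X e : incr X e e = S (X e).
Proof. unfold incr. rewrite Nat.eqb_refl. auto. Qed.
Lemma incr_other X e i : i <> e -> incr X e i = X i.
Proof. intros. unfold incr. destruct (Nat.eqb_spec i e); auto. contradiction. Qed.
Lemma incr_ge X e i : (X i <= incr X e i)%nat.
Proof. unfold incr. destruct (Nat.eqb i e); lia. Qed.
Lemma incr_le X e i : (incr X e i <= S (X i))%nat.
Proof. unfold incr. destruct (Nat.eqb i e); lia. Qed.

Lemma G_step t K X a : (a < 2*k)%nat -> (X a < K)%nat ->
  G t K (incr X a) = Cmult (psi (- (t * sg a) / W (X a))) (G t K X).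
Proof.
  intros Ha HK. unfold G.
  rewrite (outer_change t K X (incr X a) a (phi (- (t * sg a) / W (X a))) (2*k)); auto.
  - rewrite Cmult_assoc, psi_phi. ring.
  - intros e He. rewrite incr_other; auto.
  - rewrite incr_same. replace (K - X a)%nat with (S (K - S (X a))) by lia. reflexivity.
Qed.

Lemma G_harm t K X v : (v < 2*k)%nat -> (X v < K)%nat -> (X (vprev (2*k) v) < K)%nat ->
  Re (G t K X) = pa X v * Re (G t K (incr X v)) + pb X v * Re (G t K (incr X (vprev (2*k) v))).
Proof.
  intros Hv H1 H2. destruct (vprev_prop v Hv) as [Hb [Hne Hs]].
  rewrite (G_step t K X v), (G_step t K X (vprev (2*k) v)) by auto.
  rewrite Hs. destruct (G t K X) as [g1 g2].
  unfold pa, pb, psi, Cmult, Re; cbn [fst snd].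
  pose proof (hWpos (X v)). pose proof (hWpos (X (vprev (2*k) v))).
  field. repeat split; lra.
Qed.

Definition inB (N : nat) (X : nat -> nat) : bool :=
  forallb (fun i => Nat.leb N (X i - X0 i)) (seq 0 (2*k)).

Lemma inB_spec N X : inB N X = true <-> forall i, (i < 2*k)%nat -> (N <= X i - X0 i)%nat.
Proof.
  unfold inB. rewrite forallb_forall. split.
  - intros H i Hi. apply Nat.leb_le. apply H. apply in_seq. lia.
  - intros H i Hi. apply in_seq in Hi. apply Nat.leb_le. apply H. lia.
Qed.

Lemma inB_incr N X e : inB N X = true -> inB N (incr X e) = true.
Proof.
  rewrite !inB_spec. intros H i Hi. specialize (H i Hi). pose proof (incr_ge X e i). lia.
Qed.

Lemma inB_mono N N' X : (N <= N')%nat -> inB N' X = true -> inB N X = true.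
Proof. rewrite !inB_spec. intros Hn H i Hi. specialize (H i Hi). lia. Qed.

Definition above0 (X : nat -> nat) := forall e, (e < 2*k)%nat -> (X0 e <= X e)%nat.

Lemma above0_incr X e : above0 X -> above0 (incr X e).
Proof. intros H i Hi. specialize (H i Hi). pose proof (incr_ge X e i). lia. Qed.

Lemma entry N X e : (e < 2*k)%nat -> above0 X -> inB N X = false -> inB N (incr X e) = true ->
  incr X e e = (X0 e + N)%nat.
Proof.
  intros He Ha Hf Ht.
  assert (~ (forall i, (i < 2*k)%nat -> (N <= X i - X0 i)%nat)).
  { intro H. apply inB_spec in H. congruence. }
  apply not_all_ex_not in H. destruct H as [i Hi].
  apply inB_spec with (i := i) in Ht.
  - destruct (Nat.eq_dec i e).
    + subst. rewrite incr_same in *. specialize (Ha e He). lia.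
    + rewrite incr_other in Ht by auto. exfalso. apply Hi. intros. auto.
  - destruct (Nat.lt_ge_cases i (2*k)); auto. exfalso. apply Hi. intros. lia.
Qed.

Definition step_ok (K : nat) (X : nat -> nat) := forall e, (e < 2*k)%nat -> (X e + 1 < K)%nat.

Definition superh (N K : nat) (H : (nat -> nat) -> R) := forall X v, (v < 2*k)%nat -> above0 X ->
  inB N X = true -> step_ok K X ->
  pa X v * H (incr X v) + pb X v * H (incr X (vprev (2*k) v)) <= H X.


Fixpoint wsum (N n : nat) : R := match n with O => 0 | S n' => wsum N n' + W (X0 n' + N) end.

Lemma wsum_ge N n e : (e < n)%nat -> W (X0 e + N) <= wsum N n.
Proof.
  induction n; intros He; [lia|]. simpl.
  assert (0 <= wsum N n) by (clear IHn He; induction n; simpl; [lra| pose proof (hWpos (X0 n + N)); lra]).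
  destruct (Nat.eq_dec e n). subst; lra. pose proof (hWpos (X0 n + N)). specialize (IHn ltac:(lia)). lra.
Qed.

Lemma G_near1 t K X N : 0 < t -> above0 X -> inB N X = true ->
  1 - INR (2*k) * (t * (Sl - ps N)) <= Re (G t K X).
Proof.
  intros Ht Ha Hb. eapply Rle_trans; [|apply Re_ge].
  apply Rplus_le_compat_l, Ropp_le_contravar. unfold G. apply outer_sub1.
  intros e He. eapply Rle_trans; [apply blk_sub1; apply sg_abs|].
  rewrite Rabs_pos_eq by lra. apply Rmult_le_compat_l; [lra|].
  pose proof (ps_le (X e + (K - X e))). rewrite inB_spec in Hb. specialize (Hb e He). specialize (Ha e He).
  pose proof (ps_incr N (X e) ltac:(lia)). lra.
Qed.

Lemma G_bounds t K X : -1 <= Re (G t K X) <= 1.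
Proof.
  pose proof (re_le_Cmod (G t K X)). pose proof (outer_le1 t K X (2*k)). unfold G in *.
  apply Rabs_le_between. lra.
Qed.

Lemma stage : forall J Nlow, exists Nhigh, (Nlow <= Nhigh)%nat /\ forall K, exists H : (nat -> nat) -> R,
  (forall X, 0 <= H X) /\ (forall X, inB Nhigh X = true -> 1 <= H X) /\ superh Nlow K H /\
  (forall X e, (e < 2*k)%nat -> X e = (X0 e + Nlow)%nat -> (X e < K)%nat -> above0 X -> H X <= (5/7)^J).
Proof.
  induction J; intros Nlow.
  - exists Nlow. split; [lia|]. intros K. exists (fun _ => 1). repeat split.
    + intros; lra.
    + intros; lra.
    + intros X v _ _ _ _. destruct (pab X v) as [? [? ?]]. nra.
    + intros. simpl. lra.
  - set (t := 4 * wsum Nlow (2*k) + 1).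
    assert (Hw0 : 0 <= wsum Nlow (2*k)) by (pose proof (wsum_ge Nlow (2*k) 0 ltac:(lia)); pose proof (hWpos (X0 0 + Nlow)); lra).
    assert (Ht : 0 < t) by (unfold t; lra).
    assert (Hk2 : 0 < INR (2*k)) by (apply lt_0_INR; lia).
    set (eps := / (4 * INR (2*k) * t)).
    assert (Heps : 0 < eps) by (unfold eps; apply Rinv_0_lt_compat; nra).
    destruct (ps_tail eps Heps) as [N1 HN1].
    set (Nmid := (N1 + Nlow + 1)%nat).
    destruct (IHJ Nmid) as [Nhigh [HNh F]].
    exists Nhigh. split; [unfold Nmid in *; lia|]. intros K.
    destruct (F K) as [H' [H'0 [H'1 [H'2 H'3]]]].
    set (c := 4/7 * (5/7)^J).
    assert (Hc : 0 <= c) by (unfold c; apply Rmult_le_pos; [lra| apply pow_le; lra]).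
    assert (Hnear : forall Y, above0 Y -> inB Nmid Y = true -> 3/4 <= Re (G t K Y)).
    { intros Y HY1 HY2. pose proof (G_near1 t K Y Nmid Ht HY1 HY2).
      specialize (HN1 Nmid ltac:(unfold Nmid; lia)).
      assert (INR (2*k) * (t * (Sl - ps Nmid)) <= INR (2*k) * (t * eps)).
      { apply Rmult_le_compat_l; [lra|]. apply Rmult_le_compat_l; lra. }
      assert (INR (2*k) * (t * eps) = /4) by (unfold eps; field; lra). lra. }
    exists (fun X => if inB Nmid X then H' X else c * (1 + Re (G t K X))).
    repeat split.
    + intros X. destruct (inB Nmid X); auto. pose proof (G_bounds t K X). nra.
    + intros X HX. rewrite (inB_mono Nmid Nhigh X HNh HX). auto.
    + intros X v Hv Ha Hin Hok. destruct (inB Nmid X) eqn:E.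
      * rewrite !inB_incr by auto. apply H'2; auto.
      * destruct (vprev_prop v Hv) as [Hb [Hne Hs]].
        assert (Hcmp : forall e, (e < 2*k)%nat ->
           (if inB Nmid (incr X e) then H' (incr X e) else c * (1 + Re (G t K (incr X e))))
           <= c * (1 + Re (G t K (incr X e)))).
        { intros e He. destruct (inB Nmid (incr X e)) eqn:E2; [|lra].
          pose proof (entry Nmid X e He Ha E E2) as Hen.
          eapply Rle_trans. apply (H'3 (incr X e) e He Hen).
          { pose proof (incr_le X e e). specialize (Hok e He). lia. }
          { apply above0_incr; auto. }
          pose proof (Hnear (incr X e) (above0_incr X e Ha) E2).
          unfold c. replace ((5/7)^J) with (4/7 * (5/7)^J * (7/4)) at 1 by field.
          apply Rmult_le_compat_l; [exact Hc|lra]. }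
        pose proof (Hcmp v Hv). pose proof (Hcmp _ Hb).
        destruct (pab X v) as [? [? ?]].
        rewrite (G_harm t K X v Hv) by (pose proof (Hok v Hv); pose proof (Hok _ Hb); lia).
        nra.
    + intros X e He HXe HK Ha.
      assert (E : inB Nmid X = false).
      { destruct (inB Nmid X) eqn:E; auto. rewrite inB_spec in E. specialize (E e He). unfold Nmid in E. lia. }
      rewrite E.
      assert (Cmod (G t K X) <= / 4).
      { unfold G. eapply Rle_trans; [apply (outer_le_blk t K X (2*k) e He)|].
        replace (K - X e)%nat with (S (K - S (X e))) by lia. cbn [blk].
        rewrite Cmod_mult. pose proof (blk_le1 t (sg e) (S (X e)) (K - S (X e))).
        pose proof (Cmod_ge_0 (blk t (sg e) (S (X e)) (K - S (X e)))).
        assert (Cmod (phi (- (t * sg e) / W (X e))) <= / 4).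
        { apply phi_small. pose proof (hWpos (X e)).
          replace (Rabs (- (t * sg e) / W (X e))) with (t / W (X e)).
          - rewrite HXe. pose proof (wsum_ge Nlow (2*k) e He). rewrite <- HXe in *.
            apply Rmult_le_reg_r with (W (X e)); [lra|]. unfold Rdiv. rewrite Rmult_assoc, Rinv_l by lra.
            unfold t. lra.
          - unfold Rdiv. rewrite Rabs_mult, Rabs_Ropp, Rabs_mult, sg_abs, Rabs_inv, !Rabs_pos_eq by lra. ring. }
        pose proof (Cmod_ge_0 (phi (- (t * sg e) / W (X e)))). nra. }
      pose proof (Re_le_Cmod (G t K X)). simpl. unfold c.
      replace (5 / 7 * (5 / 7) ^ J) with (4/7 * (5/7)^J * (5/4)) by field.
      apply Rmult_le_compat_l; [exact Hc|lra].
Qed.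

Lemma expect_le K N0 H (f : (nat -> nat) -> R) : superh N0 K H -> (forall Y, f Y <= H Y) ->
  forall M X v, (v < 2*k)%nat -> above0 X -> inB N0 X = true -> (forall e, (e < 2*k)%nat -> (X e + M < K)%nat) ->
  errw_expect W (2*k) M X v f <= H X.
Proof.
  intros Hs Hf M. induction M; intros X v Hv Ha Hin HK; simpl errw_expect; [apply Hf|].
  destruct (vprev_prop v Hv) as [Hb [Hne Hsg]].
  destruct (pab X v) as [? [? ?]].
  eapply Rle_trans; [|apply (Hs X v Hv Ha Hin); intros e He; specialize (HK e He); lia].
  fold (pa X v). fold (pb X v).
  apply Rplus_le_compat; apply Rmult_le_compat_l; auto; apply IHM;
    auto using vnext_lt, above0_incr, inB_incr;
    intros e He; pose proof (incr_le X v e); pose proof (incr_le X (vprev (2*k) v) e); specialize (HK e He); lia.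
Qed.

End Main.

Lemma bound_nat (f : nat -> nat) n : exists B, forall e, (e < n)%nat -> (f e <= B)%nat.
Proof.
  induction n. exists 0%nat; intros; lia.
  destruct IHn as [B HB]. exists (max B (f n)). intros e He.
  destruct (Nat.eq_dec e n). subst; lia. specialize (HB e ltac:(lia)). lia.
Qed.

Theorem mainTheorem3 (k : nat) (hk : (2 <= k)%nat)
  (W : nat -> R) (hWpos : forall m, 0 < W m)
  (hWsum : exists S, Un_cv (fun n => sum_f_R0 (fun m => / W m) n) S)
  (X0 : nat -> nat) (v0 : nat) (hv0 : (v0 < 2 * k)%nat) :
  forall eps, 0 < eps ->
  exists N : nat, forall M : nat,
    prob_all_edges_N_by_M W (2 * k) X0 v0 N M <= eps.
Proof.
  intros eps Heps. destruct hWsum as [Sl hSl].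
  assert (hk1 : (1 <= k)%nat) by lia.
  destruct (pow_lt_1_zero (5/7) ltac:(rewrite Rabs_pos_eq; lra) eps Heps) as [J HJ].
  specialize (HJ J (le_n J)). rewrite Rabs_pos_eq in HJ by (apply pow_le; lra).
  destruct (stage W hWpos k hk1 X0 Sl hSl J 0) as [Nhigh [_ F]].
  exists Nhigh. intros M.
  destruct (bound_nat X0 (2*k)) as [B HB].
  destruct (F (B + M + 1)%nat) as [H [H0 [H1 [H2 H3]]]].
  unfold prob_all_edges_N_by_M.
  assert (HA : H X0 <= (5/7)^J).
  { apply (H3 X0 0%nat).
    + lia.
    + lia.
    + specialize (HB 0%nat ltac:(lia)). lia.
    + intros e He; lia. }
  assert (HE : errw_expect W (2 * k) M X0 v0 (all_edges_at_least (2 * k) Nhigh X0) <= H X0).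
  { apply (expect_le W hWpos k hk1 X0 (B + M + 1)%nat 0%nat H).
    + exact H2.
    + intros Y. unfold all_edges_at_least.
      change (forallb (fun i : nat => Nat.leb Nhigh (Y i - X0 i)) (seq 0 (2 * k))) with (inB k X0 Nhigh Y).
      destruct (inB k X0 Nhigh Y) eqn:E; [apply H1; auto| apply H0].
    + exact hv0.
    + intros e He; lia.
    + apply inB_spec. intros; lia.
    + intros e He. specialize (HB e He). lia.
    + intros e He. specialize (HB e He). lia. }
  lra.
Qed.
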